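(* Let $r\geq 1$, let $\mathbb R^r$ be endowed with the supremum norm $\|\cdot\|_\infty$, and let $|K|$ denote the Lebesgue measure of a Borel set $K\subset\mathbb R^r$. Let $J_r$ be the $r\times r$ matrix with $1$'s on the diagonal and on the superdiagonal and $0$'s elsewhere. Then there exist positive constants $C,C'$ (depending on $r$) such that for every $n\geq 2$, $$Cn^{-r(r-1)/2}\leq\bigl|\{x\in\mathbb R^r: \|J_r^kx\|_\infty\leq 1\text{ for }0\leq k<n\}\bigr|\leq C'n^{-r(r-1)/2}.$$ *)

(* Defs.v *)
From HB Require Import structures.
From mathcomp Require Import all_boot all_order all_algebra.
From mathcomp Require Import all_classical all_reals all_analysis.
Set Implicit Arguments. Unset Strict Implicit. Unset Printing Implicit Defensive.
Import Order.TTheory GRing.Theory Num.Theory.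
Import numFieldNormedType.Exports.
Local Open Scope classical_set_scope.
Local Open Scope ring_scope.

(* r-dimensional Lebesgue measure of a set K of points of R^r (points are
   r-tuples of reals), defined as the iterated product of the 1-dimensional
   Lebesgue measure: exactly the library's product-measure construction
   (m1 \x m2)(A) = \int[m1]_x m2 (xsection A x), iterated r times. *)
Fixpoint lebesgue_vol (R : realType) (r : nat) : set (r.-tuple R) -> \bar R :=
  match r return set (r.-tuple R) -> \bar R with
  | 0 => fun K => ((\1_K : 0.-tuple R -> R) [tuple])%:E
  | r'.+1 => fun K =>
      (\int[@lebesgue_measure R]_x
         lebesgue_vol [set t : r'.-tuple R | K [tuple of x :: t]])%E
  end.

Definition col_of_tuple (R : realType) (r : nat) (t : r.-tuple R) : 'cV[R]_r :=
  \col_i tnth t i.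

Definition Jmat (R : realType) (r : nat) : 'M[R]_r :=
  \matrix_(i, j) (if (val j == val i) || (val j == (val i).+1) then 1 else 0).

Definition Jpow_app (R : realType) (r k : nat) (x : 'cV[R]_r) : 'cV[R]_r :=
  iter k (fun y => Jmat R r *m y) x.

(* {x in R^r : ||J_r^k x||_oo <= 1 for 0 <= k < n}; `|.| on matrices is the
   sup norm mx_norm. *)
Definition orbit_box (R : realType) (r n : nat) : set (r.-tuple R) :=
  [set t | forall k, (k < n)%N -> `|Jpow_app k (col_of_tuple t)| <= 1].

(* Main.v *)
Require Import Defs.
From HB Require Import structures.
From mathcomp Require Import all_boot all_order all_algebra.
From mathcomp Require Import all_classical all_reals all_analysis.
From mathcomp Require Import ring lra zify.
Import Order.TTheory GRing.Theory Num.Theory.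
Local Open Scope ring_scope.
Local Open Scope ring_scope.

Lemma bin_le_exp n m : ('C(n, m) <= n ^ m)%N.
Proof.
apply: leq_trans (_ : 'C(n, m) * m`! <= _)%N; first by rewrite leq_pmulr ?fact_gt0.
rewrite bin_ffact ffact_prod.
apply: leq_trans (_ : \prod_(i < m) n <= _)%N.
  by apply: leq_prod => i _; apply: leq_subr.
by rewrite prod_nat_const card_ord.
Qed.

Section F.
Variable R : realFieldType.

Definition JF (f : nat -> R) : nat -> R := fun i => f i + f i.+1.

Lemma iterJF k f i : iter k JF f i = \sum_(j < k.+1) 'C(k, j)%:R * f (i + j)%N.
Proof.
elim: k f i => [|k IH] f i.
  by rewrite big_ord_recl big_ord0 addr0 bin0 mul1r addn0.
rewrite /= /JF !IH [in RHS]big_ord_recl /=.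

under [in RHS]eq_bigr do rewrite /bump leq0n add1n binS natrD mulrDl.
rewrite big_split /= [in LHS]big_ord_recl /= addrA; congr (_ + _).
  by rewrite !bin0 big_ord_recr /= bin_small // mul0r addr0.
by apply: eq_bigr => j _; rewrite addSnnS.
Qed.


Lemma sum_range_le (r : nat) (g : nat -> R) (g0 : forall q, 0 <= g q)
  (gr : forall q, (r <= q)%N -> g q = 0) a b :
  \sum_(a <= q < b) g q <= \sum_(a <= q < r) g q.
Proof.
have [ab|ba] := leqP a b; last first.
  rewrite big_geq; last exact: ltnW.
  exact: sumr_ge0.
have [br|rb] := leqP b r.
  rewrite (big_cat_nat ab br) /= lerDl.
  exact: sumr_ge0.
have [ar|ra] := leqP a r.
  rewrite (big_cat_nat ar (ltnW rb)) /= [X in _ + X]big1_seq ?addr0 // => q /andP[_].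
  by rewrite mem_index_iota => /andP[rq _]; apply: gr.
rewrite (big_geq (ltnW ra)) big1_seq // => q /andP[_].
rewrite mem_index_iota => /andP[aq _]; apply: gr; exact: leq_trans (ltnW ra) aq.
Qed.


Lemma sum_shift_le (r : nat) (g : nat -> R) (g0 : forall q, 0 <= g q)
  (gr : forall q, (r <= q)%N -> g q = 0) a L :
  \sum_(j < L) g (a + j)%N <= \sum_(a <= q < r) g q.
Proof.
apply: le_trans _ (sum_range_le r g g0 gr a (a + L)).
suff -> : \sum_(j < L) g (a + j)%N = \sum_(a <= q < a + L) g q by [].
elim: L => [|L IH]; first by rewrite big_ord0 addn0 big_geq.
by rewrite big_ord_recr IH addnS big_nat_recr //= leq_addr.
Qed.


Definition T h (f : nat -> R) : nat -> R := fun p => iter h JF f p - f p.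

Lemma TE h f p : T h f p = \sum_(j < h) 'C(h, j.+1)%:R * f (p + j.+1)%N.
Proof.
rewrite /T iterJF big_ord_recl bin0 mul1r addn0 addrAC subrr add0r.
by apply: eq_bigr => j _; rewrite /bump ?leq0n ?add1n.
Qed.

Definition W h r q (f : nat -> R) := \sum_(q <= j < r) (h%:R ^+ j * `|f j|).

Definition padded r (f : nat -> R) := forall j, (r <= j)%N -> f j = 0.

Lemma W_ge0 h r q f : 0 <= W h r q f.
Proof. by apply: sumr_ge0 => j _; rewrite mulr_ge0 ?exprn_ge0. Qed.

Lemma keyA h r (f : nat -> R) (fp : padded r f) d L p :
  h%:R ^+ p * `|\sum_(j < L) 'C(h, (j + d)%N)%:R * f (p + d + j)%N| <= W h r (p + d) f.
Proof.
have g0 q : 0 <= h%:R ^+ q * `|f q| :> R by rewrite mulr_ge0 ?exprn_ge0.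
have gr q : (r <= q)%N -> h%:R ^+ q * `|f q| = 0 :> R by move=> /fp ->; rewrite normr0 mulr0.
apply: le_trans _ (sum_shift_le r _ g0 gr (p + d) L).
apply: le_trans (_ : h%:R ^+ p * \sum_(j < L) `|'C(h, (j + d)%N)%:R * f (p + d + j)%N| <= _).
  by apply: ler_wpM2l; [exact: exprn_ge0 (ler0n _ _) | exact: ler_norm_sum].
rewrite mulr_sumr; apply: ler_sum => j _.
rewrite normrM mulrA ler_wpM2r ?normr_ge0 // ger0_norm ?ler0n //.
rewrite -addnA exprD ler_wpM2l ?exprn_ge0 ?ler0n // (addnC d j) -natrX ler_nat.
exact: bin_le_exp.
Qed.

Lemma T_padded h r f : padded r f -> padded r (T h f).
Proof.
move=> fp p rp; rewrite TE big1 // => j _; rewrite fp ?mulr0 //.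
by apply: leq_trans rp (leq_addr _ _).
Qed.

Lemma iterT_padded h r s f : padded r f -> padded r (iter s (T h) f).
Proof. by move=> fp; elim: s => [|s IH] //=; apply: T_padded. Qed.

Lemma T_bound1 h r f (fp : padded r f) p :
  h%:R ^+ p * `|T h f p| <= W h r p.+1 f.
Proof.
have := keyA h r f fp 1 h p; rewrite addn1 TE.
suff -> : \sum_(j < h) 'C(h, j.+1)%:R * f (p + j.+1)%N =
          \sum_(j < h) 'C(h, (j + 1)%N)%:R * f (p.+1 + j)%N by [].
by apply: eq_bigr => j _; rewrite addn1 addSnnS.
Qed.

Lemma T_bound2 h r f (fp : padded r f) p : (0 < h)%N ->
  h%:R ^+ p * `|T h f p - h%:R * f p.+1| <= W h r p.+2 f.
Proof.
case: h => [//|h] _.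
have := keyA h.+1 r f fp 2 h p; rewrite addn2 TE big_ord_recl /= bin1 addn1 addrAC subrr add0r.
suff -> : \sum_(i < h) 'C(h.+1, (bump 0 i).+1)%:R * f (p + (bump 0 i).+1)%N =
          \sum_(j < h) 'C(h.+1, (j + 2)%N)%:R * f (p.+2 + j)%N by [].
apply: eq_bigr => j _; rewrite /bump ?leq0n ?add1n addn2; congr (_ * f _).
by rewrite -addn2 -addn2 addnA addnC addnA.
Qed.

Lemma W_mono h r a b f : (a <= b)%N -> W h r b f <= W h r a f.
Proof.
move=> ab; rewrite /W.
have [br|rb] := leqP b r.
  rewrite (big_cat_nat ab br) /= lerDr; apply: sumr_ge0 => j _.
  by rewrite mulr_ge0 ?exprn_ge0.
rewrite big_geq; last exact: ltnW.
by apply: sumr_ge0 => j _; rewrite mulr_ge0 ?exprn_ge0.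
Qed.

Lemma W_T h r q f (fp : padded r f) : W h r q (T h f) <= r%:R * W h r q.+1 f.
Proof.
rewrite {1}/W.
apply: le_trans (_ : \sum_(q <= p < r) W h r q.+1 f <= _).
  apply: ler_sum_nat => p /andP[qp _]; apply: le_trans (T_bound1 h r f fp p) _.
  by apply: W_mono.
by rewrite sumr_const_nat -[W h r q.+1 f *+ _]mulr_natl ler_wpM2r ?W_ge0 // ler_nat leq_subr.
Qed.

Lemma W_iter h r s q f (fp : padded r f) :
  W h r q (iter s (T h) f) <= r%:R ^+ s * W h r (q + s) f.
Proof.
elim: s q f fp => [|s IH] q f fp; first by rewrite expr0 mul1r addn0.
rewrite iterSr; apply: le_trans (IH q _ (T_padded h r f fp)) _.
rewrite exprSr -mulrA ler_wpM2l ?exprn_ge0 ?ler0n //.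
by rewrite addnS; apply: W_T.
Qed.

Lemma iterT_main h r s f (fp : padded r f) p : (0 < h)%N ->
  `|h%:R ^+ p * iter s (T h) f p - h%:R ^+ (p + s) * f (p + s)%N| <=
     (r.+1)%:R ^+ s * W h r (p + s).+1 f.
Proof.
move=> h0; elim: s f fp => [|s IH] f fp.
  by rewrite /= addn0 subrr normr0 mulr_ge0 ?exprn_ge0 ?W_ge0.
rewrite iterSr.
set a := h%:R ^+ p * iter s (T h) (T h f) p.
set b := h%:R ^+ (p + s) * T h f (p + s)%N.
set c := h%:R ^+ (p + s.+1) * f (p + s.+1)%N.
set Wv := W h r (p + s.+1).+1 f.
have H1 : `|a - b| <= (r.+1)%:R ^+ s * (r%:R * Wv).
  apply: le_trans (IH _ (T_padded h r f fp)) _.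
  rewrite ler_wpM2l ?exprn_ge0 ?ler0n //.
  by rewrite /Wv addnS; apply: W_T.
have H2 : `|b - c| <= Wv.
  rewrite /b /c addnS exprS [h%:R * _]mulrC -mulrA -mulrBr normrM ger0_norm ?exprn_ge0 ?ler0n //.
  by rewrite /Wv addnS; apply: T_bound2.
have W0 : 0 <= Wv by apply: W_ge0.
have e1 : 1 <= (r.+1)%:R ^+ s :> R by rewrite exprn_ege1 // ler1n.
apply: le_trans (ler_distD b a c) _.
apply: le_trans (lerD H1 H2) _.
rewrite exprSr.
set e := (r.+1)%:R ^+ s in e1 H1 *.
have -> : (r.+1)%:R = r%:R + 1 :> R by rewrite -addn1 natrD.
have r0 : 0 <= r%:R :> R by [].
nra.
Qed.

Lemma iterJF_sub k f g :
  iter k JF (fun i => f i - g i) = fun i => iter k JF f i - iter k JF g i.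
Proof.
apply: funext => i; rewrite !iterJF -sumrB.
by apply: eq_bigr => j _; rewrite mulrBr.
Qed.

Lemma T_sub h f g : T h (fun i => f i - g i) = fun i => T h f i - T h g i.
Proof.
apply: funext => i; rewrite !TE -sumrB.
by apply: eq_bigr => j _; rewrite mulrBr.
Qed.

Lemma iterT_sub h s f g :
  iter s (T h) (fun i => f i - g i) = fun i => iter s (T h) f i - iter s (T h) g i.
Proof.
elim: s f g => [|s IH] f g //=.
by rewrite IH T_sub.
Qed.

Lemma iterT_JF_bound h n x
  (H : forall k p, (k < n)%N -> `|iter k JF x p| <= 1) s k :
  (k + s * h < n)%N -> forall p, `|iter s (T h) (iter k JF x) p| <= 2%:R ^+ s.
Proof.
elim: s k => [|s IH] k Hk p; first by rewrite expr0 /=; apply: H; rewrite mul0n addn0 in Hk.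
rewrite iterSr.
have -> : T h (iter k JF x) = fun i => iter (h + k) JF x i - iter k JF x i.
  by apply: funext => i; rewrite /T iterD.
rewrite iterT_sub; apply: le_trans (ler_normB _ _) _.
rewrite mulSn in Hk.
rewrite exprS mulr2n mulrDl mul1r; apply: lerD.
  by apply: IH; lia.
by apply: IH; lia.
Qed.

Lemma markov_fun r n x (xp : padded r x)
  (H : forall k p, (k < n)%N -> `|iter k JF x p| <= 1) (n0 : (0 < n)%N) j :
  (j < r)%N ->
  `|x j| * n%:R ^+ j <= (2%:R ^+ r + (r.+1)%:R ^+ r + 1) ^+ r * (2 * r)%N%:R ^+ r.
Proof.
move=> jr.
have r0 : (0 < r)%N by apply: leq_ltn_trans jr.
set B : R := 2%:R ^+ r + (r.+1)%:R ^+ r + 1.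
have B1 : 1 <= B.
  by rewrite /B lerDr addr_ge0 ?exprn_ge0 ?ler0n.
have Br1 : 1 <= B ^+ r by rewrite exprn_ege1.
have er1 : 1 <= (2 * r)%N%:R ^+ r :> R.
  by rewrite exprn_ege1 // ler1n muln_gt0.
have ejr : (2 * r)%N%:R ^+ j <= (2 * r)%N%:R ^+ r :> R.
  by apply: ler_weXn2l; [rewrite ler1n muln_gt0 | exact: ltnW].
set h := (n.-1 %/ r)%N.
have [rn|nr] := leqP r n.-1; last first.
  have xj1 : `|x j| <= 1 by have := H 0%N j n0.
  have nj : n%:R ^+ j <= (2 * r)%N%:R ^+ r :> R.
    apply: le_trans ejr; apply: lerXn2r; rewrite ?nnegrE ?ler0n // ler_nat.
    lia.
  apply: le_trans (_ : 1 * (2 * r)%N%:R ^+ r <= _); last by rewrite ler_wpM2r ?exprn_ge0 ?ler0n.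
  by apply: ler_pM; rewrite ?normr_ge0 ?exprn_ge0 ?ler0n.
have h0 : (0 < h)%N by rewrite /h divn_gt0.
have hrn : (h * r <= n.-1)%N by apply: leq_trunc_div.
have hs s : (s < r)%N -> (0 + s * h < n)%N.
  move=> sr; rewrite add0n; apply: leq_ltn_trans (_ : n.-1 < n)%N; last by rewrite prednK.
  by apply: leq_trans hrn; rewrite mulnC leq_mul2l ltnW ?orbT.
have Hs s : (s < r)%N -> h%:R ^+ s * `|x s| <= 2%:R ^+ s + (r.+1)%:R ^+ s * W h r s.+1 x.
  move=> sr.
  have M := iterT_main h r s x xp 0 h0; rewrite expr0 mul1r !add0n in M.
  have Bd := iterT_JF_bound h n x H s 0 (hs s sr) 0; rewrite /= in Bd.
  rewrite -(ger0_norm (exprn_ge0 s (ler0n R h))) -normrM.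
  set u := iter s (T h) x 0; set v := h%:R ^+ s * x s.
  have := ler_normD u (v - u); rewrite addrC subrK => Hv.
  apply: le_trans Hv _; apply: lerD => //; by rewrite distrC.
have D t : (t <= r)%N -> W h r (r - t) x <= B ^+ t.
  elim: t => [|t IH] tr; first by rewrite subn0 /W big_geq.
  set s := (r - t.+1)%N.
  have sr : (s < r)%N by rewrite /s; lia.
  have Ss : s.+1 = (r - t)%N by rewrite /s; lia.
  rewrite /W big_ltn // -/(W h r s.+1 x) Ss.
  have Wt := IH (ltnW tr).
  have W0 := W_ge0 h r (r - t) x.
  have e1 : 2%:R ^+ s <= 2%:R ^+ r :> R by apply: ler_weXn2l; [rewrite ler1n | exact: ltnW].
  have e2 : (r.+1)%:R ^+ s <= (r.+1)%:R ^+ r :> R by apply: ler_weXn2l; [rewrite ler1n | exact: ltnW].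
  have Bt1 : 1 <= B ^+ t by rewrite exprn_ege1.
  apply: le_trans (lerD (Hs s sr) (lexx _)) _; rewrite -Ss.
  have e3 : (r.+1)%:R ^+ s * W h r s.+1 x <= (r.+1)%:R ^+ r * B ^+ t.
    by rewrite Ss; apply: ler_pM; rewrite ?exprn_ge0 ?ler0n.
  rewrite Ss in e3 *.
  rewrite exprS {1}/B.
  have e4 : 2%:R ^+ r <= 2%:R ^+ r * B ^+ t :> R by rewrite ler_peMr ?exprn_ge0.
  set P := 2%:R ^+ r in e1 e4 *; set Q := (r.+1)%:R ^+ r in e2 e3 *.
  set X := W h r (r - t) x in Wt W0 e3 *; set Y := B ^+ t in Bt1 e4 Wt e3 *.
  rewrite !mulrDl mul1r; apply: lerD; last exact: Wt.
  apply: lerD; last exact: e3.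
  exact: le_trans e1 e4.
have Wj : h%:R ^+ j * `|x j| <= B ^+ r.
  have := D (r - j)%N (leq_subr _ _); rewrite subKn; last exact: ltnW.
  rewrite /W big_ltn // -/(W h r j.+1 x) => Hj.
  apply: le_trans (_ : B ^+ (r - j) <= _); last by apply: ler_weXn2l => //; exact: leq_subr.
  by apply: le_trans Hj; rewrite lerDl W_ge0.
have n2 : (n <= 2 * r * h)%N.
  have := ltn_ceil n.-1 r0; rewrite -/h => nl.
  have : (r <= h * r)%N by rewrite leq_pmull.
  nia.
apply: le_trans (_ : `|x j| * ((2 * r)%N%:R ^+ j * h%:R ^+ j) <= _).
  rewrite ler_wpM2l ?normr_ge0 // -exprMn -natrM; apply: lerXn2r; rewrite ?nnegrE ?ler0n // ler_nat.
  exact: n2.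
rewrite mulrCA mulrC; apply: ler_pM; rewrite ?mulr_ge0 ?normr_ge0 ?exprn_ge0 ?ler0n //.
by rewrite mulrC.
Qed.

End F.
Local Open Scope ring_scope.
Local Open Scope classical_set_scope.

Section Vol.
Variable R : realType.
Local Open Scope ereal_scope.

Lemma int_mono (f g : R -> \bar R) : (forall x, 0 <= f x) -> (forall x, f x <= g x) ->
  \int[@lebesgue_measure R]_x f x <= \int[@lebesgue_measure R]_x g x.
Proof.
move=> f0 fg.
have g0 x : 0 <= g x by apply: le_trans (fg x).
rewrite !ge0_integralTE//.
apply: ereal_sup_le => _ [h /= hf <-]; exists h => //= x.
exact: le_trans (fg x).
Qed.

Lemma vol_ge0 r (K : set (r.-tuple R)) : 0 <= lebesgue_vol K.
Proof.
elim: r K => [|r IH] K /=; first by rewrite lee_fin indicE; case: ([tuple] \in K).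
by apply: integral_ge0 => x _; apply: IH.
Qed.

Lemma vol_le r (K K' : set (r.-tuple R)) : K `<=` K' -> lebesgue_vol K <= lebesgue_vol K'.
Proof.
elim: r K K' => [|r IH] K K' KK' /=.
  rewrite lee_fin /indic; case: (boolP ([tuple] \in K)) => [/set_mem/KK' /mem_set ->|_]//.
apply: int_mono => x; first exact: vol_ge0.
by apply: IH => t /= /KK'.
Qed.

Lemma vol0 r : lebesgue_vol (set0 : set (r.-tuple R)) = 0.
Proof.
elim: r => [|r IH] /=; first by rewrite indicE in_set0.
rewrite (_ : (fun x => _) = cst 0) ?integral0//.
by apply: funext => x; rewrite -IH.
Qed.

Definition box r (a : nat -> R) : set (r.-tuple R) :=
  [set t | forall i, (i < r)%N -> (`|nth 0%R t i| <= a i)%R].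

Lemma vol_box r a : (forall i, 0 <= a i)%R ->
  lebesgue_vol (box r a) = (\prod_(i < r) (2 * a i))%:E.
Proof.
elim: r a => [|r IH] a a0 /=.
  rewrite big_ord0 indicE; congr (_%:E); rewrite mem_set//.
rewrite big_ord_recl.
have -> : (fun x : R => lebesgue_vol [set t : r.-tuple R | box r.+1 a [tuple of x :: t]])
   = (fun x => (\1_(`[(- a 0%N)%R, a 0%N]%classic) x)%:E * (\prod_(i < r) (2 * a (bump 0 i)))%:E).
  apply: funext => x; rewrite indicE.
  case: (boolP (x \in _)) => [|] xin.
    rewrite mul1e -(IH (fun i => a i.+1))//; congr lebesgue_vol.
    apply: funext => t /=; apply: propext; split.
      by move=> H i ir; apply: (H i.+1).
    move=> H [|i] ir //=.
    by move: xin => /set_mem /=; rewrite in_itv /= -ler_norml.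
    by apply: H.
  rewrite /= mul0e (_ : [set t | _] = set0) ?vol0//.
  apply/seteqP; split=> t //= /(_ 0%N isT) /=.
  move: xin => /negP; rewrite inE /= in_itv /= -ler_norml => H1 H2; rewrite H2 in H1; exact: H1.
set P := (\prod_(i < r) (2 * a (bump 0 i)))%R.
apply: (@eq_trans _ _ ((\int[lebesgue_measure]_x (\1_(`[(- a 0%N)%R, a 0%N]%classic) x)%:E) * P%:E)).
  exact: (integralZr measurableT (integrable_indic_itv _ _ _ _)).
rewrite integral_indic//= setIT lebesgue_measure_itv /= lte_fin.
have -> : P = (\prod_(i < r) (2 * a (lift ord0 i)))%R by [].
case: ifPn => ha.
  by rewrite -EFinD -EFinM opprK -mulr2n mulr_natl.
have -> : a 0%N = 0%R.
  apply/eqP; rewrite eq_le a0 andbT leNgt; apply: contra ha => h.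
  by rewrite (@lt_trans _ _ 0%R) // oppr_lt0.
by rewrite mul0e mulr0 mul0r.
Qed.

End Vol.
Local Open Scope ring_scope.
Local Open Scope classical_set_scope.

Arguments JF {R}.
Arguments padded {R}.
Arguments T {R}.
Arguments W {R}.

Section C.
Variable R : realType.
Variable m : nat.

Definition pad (v : 'cV[R]_m.+1) : nat -> R :=
  fun i => if (i < m.+1)%N then v (inord i) 0 else 0.

Lemma pad_padded v : padded m.+1 (pad v).
Proof. by move=> j jr; rewrite /pad ltnNge jr. Qed.

Lemma sum_pick (v : 'cV[R]_m.+1) a :
  \sum_(j < m.+1) (if val j == a then v j 0 else 0) = pad v a.
Proof.
rewrite /pad; case: ifP => ha.
  rewrite (bigD1 (inord a)) //= inordK // eqxx big1 ?addr0 // => j jne.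
  case: eqP => // ja; move: jne; rewrite -ja inord_val eqxx //.
by rewrite big1 // => j _; case: eqP => // ja; move: ha; rewrite -ja ltn_ord.
Qed.

Lemma pad_J v : pad (Jmat R m.+1 *m v) = JF (pad v).
Proof.
apply: funext => i; rewrite /JF.
case: (ltnP i m.+1) => hi; last first.
  by rewrite /pad ltnNge hi /= ltnNge (leqW hi) /= addr0.
rewrite {1}/pad hi mxE.
rewrite -sum_pick -sum_pick -big_split /=; apply: eq_bigr => j _.
have vi : \val (inord i : 'I_m.+1) = i by rewrite /= inordK.
rewrite mxE vi.
rewrite /=; have [e|ne] := eqVneq (nat_of_ord j) i.
  by rewrite e /= (ltn_eqF (ltnSn i)) mul1r addr0.
rewrite /=; case: eqP => _; by rewrite ?mul1r ?mul0r ?add0r.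

Qed.

Lemma pad_iter k v : pad (Jpow_app k v) = iter k JF (pad v).
Proof. by elim: k => [|k IH] //=; rewrite -IH -pad_J. Qed.

Lemma norm_pad_le (v : 'cV[R]_m.+1) c : 0 <= c -> `|v| <= c -> forall i, `|pad v i| <= c.
Proof.
move=> c0 vc i; rewrite /pad; case: ifP => hi; last by rewrite normr0.
apply: le_trans vc; have -> : `|v| = mx_norm v by []. rewrite mx_normrE.
exact: (le_bigmax _ _ (inord i, 0)).
Qed.

Lemma le_norm_pad (v : 'cV[R]_m.+1) c : 0 <= c -> (forall i, `|pad v i| <= c) -> `|v| <= c.
Proof.
move=> c0 H; have -> : `|v| = mx_norm v by []. rewrite mx_normrE.
apply: bigmax_le => // -[i j] _ /=.
have := H i; rewrite /pad ltn_ord inord_val.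
by rewrite (ord1 j).
Qed.

Lemma col_pad (t : m.+1.-tuple R) i : pad (col_of_tuple t) i = nth 0 t i.
Proof.
rewrite /pad /col_of_tuple; case: ifP => hi.
  by rewrite mxE (tnth_nth 0) inordK.
by rewrite nth_default // size_tuple leqNgt hi.
Qed.

Lemma lower_fun (q c : R) (x : nat -> R) (q0 : 0 <= q) (c0 : 0 <= c)
  (Hx : forall i, `|x i| <= c * q ^+ i) k i :
  `|iter k JF x i| <= c * q ^+ i * (1 + q) ^+ k.
Proof.
elim: k i => [|k IH] i; first by rewrite expr0 mulr1.
rewrite /= /JF; apply: le_trans (ler_normD _ _) _.
apply: le_trans (lerD (IH i) (IH i.+1)) _.
rewrite !exprS le_eqVlt; apply/orP; left; apply/eqP; ring.
Qed.

Definition Acst : R :=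
  (2%:R ^+ m.+1 + (m.+2)%:R ^+ m.+1 + 1) ^+ m.+1 * (2 * m.+1)%N%:R ^+ m.+1.

Lemma Acst_gt0 : 0 < Acst.
Proof.
by rewrite /Acst mulr_gt0 // exprn_gt0 // ?ltr0n ?muln_gt0 // ltr_pwDr // addr_ge0 ?exprn_ge0.
Qed.

Lemma upper_incl n : (0 < n)%N ->
  @orbit_box R m.+1 n `<=` @box R m.+1 (fun j => Acst * n%:R ^- j).
Proof.
move=> n0 t Ht j jr.
have H : forall k p, (k < n)%N -> `|iter k JF (pad (col_of_tuple t)) p| <= 1.
  by move=> k p kn; rewrite -pad_iter; apply: norm_pad_le => //; exact: Ht.
have := @markov_fun R m.+1 n _ (pad_padded (col_of_tuple t)) H n0 j jr.
rewrite col_pad => M.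
rewrite -[Acst * _]/(Acst / n%:R ^+ j) ler_pdivlMr ?exprn_gt0 ?ltr0n //.
Qed.

Lemma lower_incl n : (0 < n)%N ->
  @box R m.+1 (fun j => (expR 1)^-1 * n%:R ^- j) `<=` @orbit_box R m.+1 n.
Proof.
move=> n0 t Ht k kn.
set q : R := n%:R^-1.
have q0 : 0 <= q by rewrite invr_ge0 ler0n.
have q1 : q <= 1 by rewrite /q invf_le1 ?ler1n ?ltr0n.
set c : R := (expR 1)^-1.
have c0 : 0 <= c by rewrite invr_ge0 ltW ?expR_gt0.
apply: le_norm_pad => // p; rewrite pad_iter.
have Hx : forall i, `|pad (col_of_tuple t) i| <= c * q ^+ i.
  move=> i; rewrite col_pad; case: (ltnP i m.+1) => hi.
    by rewrite /q exprVn; apply: Ht.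
  by rewrite nth_default ?size_tuple // normr0 mulr_ge0 ?exprn_ge0.
apply: le_trans (lower_fun q c _ q0 c0 Hx k p) _.
have e1 : q ^+ p <= 1 by rewrite exprn_ile1.
have e2 : (1 + q) ^+ k <= expR 1.
  apply: le_trans (_ : expR q ^+ k <= _).
    by apply: lerXn2r; [rewrite nnegrE addr_ge0 | rewrite nnegrE ltW ?expR_gt0 | exact: expR_ge1Dx].
  rewrite -expRM_natl ler_expR /q ler_pdivrMr ?ltr0n // mul1r ler_nat.
  exact: ltnW.
have : c * q ^+ p * (1 + q) ^+ k <= c * 1 * expR 1.
  apply: ler_pM; [by rewrite mulr_ge0 ?exprn_ge0 | by rewrite exprn_ge0 ?addr_ge0 | by rewrite ler_wpM2l | exact: e2].
by rewrite mulr1 mulVf // gt_eqF // expR_gt0.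
Qed.

End C.
Local Open Scope ring_scope.

Lemma prod_pow (R : realType) (a N : R) r :
  \prod_(i < r) (2 * (a * N ^- i)) = (2 * a) ^+ r * N ^- (r * r.-1)./2.
Proof.
under eq_bigr do rewrite mulrA.
rewrite big_split /= prodr_const card_ord; congr (_ * _).
under eq_bigr do rewrite -exprVn.
rewrite prodrXr -exprVn; congr (_ ^+ _).
by rewrite -(big_mkord xpredT (fun i => i)) bin2_sum bin2.
Qed.

Theorem corollaryB3 (R : realType) (r : nat) (hr : (1 <= r)%N) :
  exists C C' : R, 0 < C /\ 0 < C' /\
    forall n : nat, (2 <= n)%N ->
      ((C * n%:R ^- (r * r.-1)./2)%:E <= lebesgue_vol (@orbit_box R r n))%E /\
      (lebesgue_vol (@orbit_box R r n) <= (C' * n%:R ^- (r * r.-1)./2)%:E)%E.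
Proof.
case: r hr => [//|m] _.
exists ((2 * (expR 1)^-1) ^+ m.+1), ((2 * Acst R m) ^+ m.+1).
split; first by rewrite exprn_gt0 // mulr_gt0 // invr_gt0 expR_gt0.
split; first by rewrite exprn_gt0 // mulr_gt0 // Acst_gt0.
move=> n n2; have n0 : (0 < n)%N by apply: leq_trans n2.
split.
  apply: le_trans (vol_le R m.+1 _ _ (lower_incl R m n n0)).
  rewrite vol_box; last first.
    by move=> i; apply: divr_ge0; [rewrite invr_ge0 ltW // expR_gt0 | exact: exprn_ge0 (ler0n _ _)].
  by rewrite prod_pow.
apply: le_trans (vol_le R m.+1 _ _ (upper_incl R m n n0)) _.
rewrite vol_box; last first.
  by move=> i; apply: divr_ge0; [exact: ltW (Acst_gt0 R m) | exact: exprn_ge0 (ler0n _ _)].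
by rewrite prod_pow.
Qed.
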